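(* Let $p\ge 2$ and $q$ be coprime integers, $I_1,I_3>0$, $\eta=I_1/I_3-1$. For every $h\in C$ define $$t_{\max}(h)=\frac{2I_1\,\min\big(\pi,\tau_\ell(\bar h_3)\big)}{|h|}.$$ Then $t_{\max}(h)\le t_{\mathrm{conj}}(h)$ for every $h\in C$, where $t_{\mathrm{conj}}(h)$ is the first conjugate time along the unit-speed geodesic $\gamma_h$ (i.e., the smallest $t>0$ such that $\gamma_h(t)$ is conjugate to $\gamma_h(0)$ along $\gamma_h$, or $+\infty$ if none).
   Context: Identify $S^3=\{(z,w)\in\mathbb{C}^2:|z|^2+|w|^2=1\}$ with $\mathrm{SU}_2$ via $(z,w)\mapsto\begin{pmatrix} z& w\\ -\bar w&\bar z\end{pmatrix}$, write $z=q_0+iq_3$, $w=q_1+iq_2$. The basis of $\mathfrak{su}_2$ is $e_1=\frac12\begin{pmatrix}0&1\\-1&0\end{pmatrix}$, $e_2=\frac12\begin{pmatrix}0&i\\ i&0\end{pmatrix}$, $e_3=\frac12\begin{pmatrix}i&0\\0&-i\end{pmatrix}$. The metric $g$ is the left-invariant metric on $\mathrm{SU}_2$ equal to $I_1u_1^2+I_1u_2^2+I_3u_3^2$ at the identity on $u_1e_1+u_2e_2+u_3e_3$; it is invariant under the $\mathbb{Z}_p$-action $[k]\cdot(z,w)=(e^{2\pi ik/p}z,e^{2\pi ikq/p}w)$, so it descends to $L(p;q)=S^3/\mathbb{Z}_p$ (projection $\Pi$); conjugate points along a geodesic are the same upstairs and downstairs. Let $C=\{h=(h_1,h_2,h_3)\in\mathfrak{su}_2^*: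 \frac{h_1^2+h_2^2}{I_1}+\frac{h_3^2}{I_3}=1\}$ (coordinates in the dual basis); each $h\in C$ determines the arclength-parametrized geodesic $\gamma_h$ of $(\mathrm{SU}_2,g)$ from the identity (the projection of the Hamiltonian flow of $H=\frac12(\frac{h_1^2+h_2^2}{I_1}+\frac{h_3^2}{I_3})$ starting at $h$). Put $|h|=\sqrt{h_1^2+h_2^2+h_3^2}$, $\bar h_i=h_i/|h|$, $\tau=2I_1t/|h|$; note $|h|=\sqrt{I_1}/\sqrt{1+\eta\bar h_3^2}$. Along $\gamma_h$: $q_0=\cos\tau\cos(\tau\eta\bar h_3)-\bar h_3\sin\tau\sin(\tau\eta\bar h_3)$, $q_3=\cos\tau\sin(\tau\eta\bar h_3)+\bar h_3\sin\tau\cos(\tau\eta\bar h_3)$. Define $\ell_\mp(\tau,s)=\cos\tau\sin(\tau\eta s\mp\frac{\pi}{p})+s\sin\tau\cos(\tau\eta s\mp\frac{\pi}{p})$ (these equal $q_3\cos\frac\pi p\mp q_0\sin\frac\pi p$ along $\gamma_h$ with $s=\bar h_3$), let $\tau_\ell^\mp(s)$ be the smallest positive root in $\tau$ of $\ell_\mp(\tau,s)=0$ and $\tau_\ell(s)=\min(\tau_\ell^-(s),\tau_\ell^+(s))$. *)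

(* Defs.v *)
From HB Require Import structures.
From mathcomp Require Import all_boot all_order all_algebra.
From mathcomp Require Import all_classical all_reals all_analysis.
Set Implicit Arguments. Unset Strict Implicit. Unset Printing Implicit Defensive.
Import Order.TTheory GRing.Theory Num.Theory.
Import numFieldNormedType.Exports.
Local Open Scope classical_set_scope.
Local Open Scope ring_scope.

Section LensDefs.
Variable R : realType.

(* coordinates h_1, h_2, h_3 of h in the dual basis (1-indexed as in the paper) *)
Definition hc (h : 'rV[R]_3) (k : nat) : R := h 0 (inord k.-1).

Definition hnorm (h : 'rV[R]_3) : R :=
  Num.sqrt (hc h 1 ^+ 2 + hc h 2 ^+ 2 + hc h 3 ^+ 2).

Definition hbar (h : 'rV[R]_3) (k : nat) : R := hc h k / hnorm h.

Definition eta (I1 I3 : R) : R := I1 / I3 - 1.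

Definition inC (I1 I3 : R) (h : 'rV[R]_3) : Prop :=
  (hc h 1 ^+ 2 + hc h 2 ^+ 2) / I1 + hc h 3 ^+ 2 / I3 = 1.

(* The geodesic gamma_h(t) of (SU_2, g) from the identity, in coordinates
   (q0, q1, q2, q3) with z = q0 + i q3, w = q1 + i q2.  It is
   gamma_h(t) = exp(t (h1 e1 + h2 e2 + h3 e3)/I1) exp(t h3 (1/I3 - 1/I1) e3),
   the solution of the Euler-Arnold (Hamiltonian) equations
   g' = g u, h' = h x u, u = (h1/I1, h2/I1, h3/I3), g(0) = id, h(0) = h.
   The formula makes sense for every h <> 0 (and is unit-speed for h in C);
   gamma_{lambda h}(t) = gamma_h(lambda t). *)
Definition gam (I1 I3 : R) (h : 'rV[R]_3) (t : R) : 'rV[R]_4 :=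
  let th := t * hnorm h / (2 * I1) in
  let ph := th * eta I1 I3 * hbar h 3 in
  let q0 := cos th * cos ph - hbar h 3 * sin th * sin ph in
  let q3 := cos th * sin ph + hbar h 3 * sin th * cos ph in
  let q1 := sin th * (hbar h 1 * cos ph + hbar h 2 * sin ph) in
  let q2 := sin th * (hbar h 2 * cos ph - hbar h 1 * sin ph) in
  \row_(i < 4) nth 0 [:: q0; q1; q2; q3] i.

(* gamma_h(t) is conjugate to gamma_h(0) along gamma_h: the exponential map
   is critical at t*v_h, i.e. the differential at h of h' |-> gamma_{h'}(t)
   (which equals Exp(t * u(h')) with u a linear isomorphism) is singular. *)
Definition conjugate_at (I1 I3 : R) (h : 'rV[R]_3) (t : R) : Prop :=
  differentiable (fun h' : 'rV[R]_3 => gam I1 I3 h' t) h /\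
  exists v : 'rV[R]_3, v != 0 /\ 'd (fun h' : 'rV[R]_3 => gam I1 I3 h' t) h v = 0.

Definition t_conj (I1 I3 : R) (h : 'rV[R]_3) : \bar R :=
  ereal_inf [set t%:E | t in [set t : R | 0 < t /\ conjugate_at I1 I3 h t]].

(* ell_-(tau,s) for sg = 1, ell_+(tau,s) for sg = -1 *)
Definition ell (p : nat) (et sg tau s : R) : R :=
  cos tau * sin (tau * et * s - sg * (pi / p%:R))
  + s * sin tau * cos (tau * et * s - sg * (pi / p%:R)).

Definition tau_ell_pm (p : nat) (et sg s : R) : \bar R :=
  ereal_inf [set t%:E | t in [set t : R | 0 < t /\ ell p et sg t s = 0]].

Definition tau_ell (p : nat) (et s : R) : \bar R :=
  Order.min (tau_ell_pm p et 1 s) (tau_ell_pm p et (-1) s).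

Definition t_max (p : nat) (I1 I3 : R) (h : 'rV[R]_3) : R :=
  2 * I1 * fine (Order.min (pi%:E) (tau_ell p (eta I1 I3) (hbar h 3))) / hnorm h.

End LensDefs.

(* Main.v *)
Require Import Defs.
From HB Require Import structures.
From mathcomp Require Import all_boot all_order all_algebra.
From mathcomp Require Import all_classical all_reals all_analysis.
From mathcomp Require Import ring lra zify.
Import Order.TTheory GRing.Theory Num.Theory.
Import numFieldNormedType.Exports.
Local Open Scope classical_set_scope.
Local Open Scope ring_scope.
Set Implicit Arguments. Unset Strict Implicit.

Section S0.
Variable R : realType.

Lemma xcos_le_sin (x : R) : 0 <= x <= pi / 2 -> x * cos x <= sin x.
Proof.
move=> /andP[x0 xp].
pose g := fun y : R => sin y - y * cos y.
have dg : forall y : R, is_derive y (1:R) g (y * sin y).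
  move=> y. rewrite /g.
  have h1 := is_derive_sin y.
  have h2 : is_derive y (1:R) (fun z : R => z * cos z) (1 * cos y + y * - sin y).
    apply: is_derive_eq. rewrite /GRing.scale /=. ring.
  have h3 := is_deriveB h1 h2.
  apply: is_derive_eq. ring.
suff : g 0 <= g x by rewrite /g sin0 mul0r subr0 subr_ge0.
apply: (@ger0_derive1_ndecr _ g 0 (pi/2)) => //.
- move=> y; rewrite in_itv /= => /andP[y0 yp].
  rewrite derive1E. case: (dg y) => _ ->. apply: mulr_ge0; first lra.
  by apply: sin_ge0_pi; apply/andP; split; [lra|have := pi_gt0 R; lra].
- apply: continuous_subspaceT => y.
  apply: differentiable_continuous; apply/derivable1_diffP.
  have [? _] := dg y; done.
Qed.
End S0.


Section S1.
Variable R : realType.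

Lemma is_derive_cosc (f : R -> R) (x df : R) :
  is_derive x 1 f df -> is_derive x 1 (fun y => cos (f y)) (- sin (f x) * df).
Proof. move=> H. exact: (@is_derive1_comp _ cos f). Qed.

Lemma is_derive_sinc (f : R -> R) (x df : R) :
  is_derive x 1 f df -> is_derive x 1 (fun y => sin (f y)) (cos (f x) * df).
Proof. move=> H. exact: (@is_derive1_comp _ sin f). Qed.

Lemma is_derive_sqrtc (f : R -> R) (x df : R) :
  is_derive x 1 f df -> 0 < f x -> is_derive x 1 (fun y => Num.sqrt (f y)) ((2 * Num.sqrt (f x))^-1 * df).
Proof. move=> H H0. apply: (@is_derive1_comp _ Num.sqrt f) => //. exact: is_derive1_sqrt. Qed.

Lemma is_deriveM' (f g : R -> R) (x df dg : R) :
  is_derive x 1 f df -> is_derive x 1 g dg ->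
  is_derive x 1 (fun y => f y * g y) (df * g x + f x * dg).
Proof.
move=> Hf Hg. have H := is_deriveM Hf Hg. apply: is_derive_eq.
rewrite /GRing.scale /=. ring.
Qed.

Lemma is_deriveB' (f g : R -> R) (x df dg : R) :
  is_derive x 1 f df -> is_derive x 1 g dg ->
  is_derive x 1 (fun y => f y - g y) (df - dg).
Proof. move=> Hf Hg. have H := is_deriveB Hf Hg. exact: is_derive_eq. Qed.

Lemma is_deriveD' (f g : R -> R) (x df dg : R) :
  is_derive x 1 f df -> is_derive x 1 g dg ->
  is_derive x 1 (fun y => f y + g y) (df + dg).
Proof. move=> Hf Hg. have H := is_deriveD Hf Hg. exact: is_derive_eq. Qed.

Lemma is_deriveV' (f : R -> R) (x df : R) :
  is_derive x 1 f df -> f x != 0 -> is_derive x 1 (fun y => (f y)^-1) (- (f x)^-2 * df).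
Proof. move=> Hf H0. have H := is_deriveV H0 Hf. exact: is_derive_eq. Qed.

Lemma is_derive_lin (x c d : R) : is_derive x 1 (fun e : R => e * c + d) c.
Proof.
have H1 : is_derive x (1:R) (fun e : R => e) 1 := is_derive_id _ _.
have H2 := is_deriveM' H1 (is_derive_cst c x 1).
have H3 := is_deriveD' H2 (is_derive_cst d x 1).
apply: (is_derive_eq H3). by rewrite /cst mul1r mulr0 !addr0.
Qed.

Lemma is_derive_cstc (x c : R) : is_derive x 1 (fun e : R => c) 0.
Proof. exact: is_derive_cst. Qed.

End S1.

Section S2.
Variable R : realType.

Definition dQ0 (c S cP sP b1 b2 b3 dT dP dB1 dB2 dB3 : R) :=
  - S * dT * cP + c * (- sP * dP) - ((dB3 * S + b3 * (c * dT)) * sP + b3 * S * (cP * dP)).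
Definition dQ3 (c S cP sP b1 b2 b3 dT dP dB1 dB2 dB3 : R) :=
  - S * dT * sP + c * (cP * dP) + ((dB3 * S + b3 * (c * dT)) * cP + b3 * S * (- sP * dP)).
Definition dQ1 (c S cP sP b1 b2 b3 dT dP dB1 dB2 dB3 : R) :=
  c * dT * (b1 * cP + b2 * sP) + S * ((dB1 * cP + b1 * (- sP * dP)) + (dB2 * sP + b2 * (cP * dP))).
Definition dQ2 (c S cP sP b1 b2 b3 dT dP dB1 dB2 dB3 : R) :=
  c * dT * (b2 * cP - b1 * sP) + S * ((dB2 * cP + b2 * (- sP * dP)) - (dB1 * sP + b1 * (cP * dP))).

Lemma eq_from (a b x : R) : a - b = x -> x = 0 -> a = b.
Proof. by move=> H x0; apply/eqP; rewrite -subr_eq0 H x0. Qed.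

Lemma kernel_alg (c S cP sP b1 b2 b3 dT dP dB1 dB2 dB3 et tau : R) :
  cP ^+ 2 + sP ^+ 2 = 1 -> S != 0 ->
  (1 + et * b3 ^+ 2) * S + et * (1 - b3 ^+ 2) * tau * c != 0 ->
  1 + et * b3 ^+ 2 != 0 ->
  dP = et * (dT * b3 + tau * dB3) ->
  dQ0 c S cP sP b1 b2 b3 dT dP dB1 dB2 dB3 = 0 ->
  dQ1 c S cP sP b1 b2 b3 dT dP dB1 dB2 dB3 = 0 ->
  dQ2 c S cP sP b1 b2 b3 dT dP dB1 dB2 dB3 = 0 ->
  dQ3 c S cP sP b1 b2 b3 dT dP dB1 dB2 dB3 = 0 ->
  [/\ dT = 0, dB1 = 0, dB2 = 0 & dB3 = 0].
Proof.
move=> u S0 F0 m0 hP E0 E1 E2 E3.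
have e1 : S * (dT + b3 * dP) = 0.
  have id1 : cP * dQ0 c S cP sP b1 b2 b3 dT dP dB1 dB2 dB3 + sP * dQ3 c S cP sP b1 b2 b3 dT dP dB1 dB2 dB3
     = - (S * (dT + b3 * dP)) * (cP ^+ 2 + sP ^+ 2) by rewrite /dQ0 /dQ3; ring.
  move: id1; rewrite E0 E3 u !mulr0 addr0 mulr1 => /esym /eqP; rewrite oppr_eq0 => /eqP //.
have e2 : c * dP + dB3 * S + b3 * c * dT = 0.
  have id2 : cP * dQ3 c S cP sP b1 b2 b3 dT dP dB1 dB2 dB3 - sP * dQ0 c S cP sP b1 b2 b3 dT dP dB1 dB2 dB3
     = (c * dP + dB3 * S + b3 * c * dT) * (cP ^+ 2 + sP ^+ 2) by rewrite /dQ0 /dQ3; ring.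
  by move: id2; rewrite E0 E3 u !mulr0 subr0 mulr1.
have e1' : dT = - (b3 * dP).
  move/eqP: e1; rewrite mulf_eq0 (negbTE S0) /= addr_eq0 => /eqP //.
have hB3 : dB3 = 0.
  have : ((1 + et * b3 ^+ 2) * S + et * (1 - b3 ^+ 2) * tau * c) * dB3 = 0.
    have hP2 : dP * (1 + et * b3 ^+ 2) = et * tau * dB3.
      rewrite e1' in hP. apply: (eq_from (x := dP - et * (- (b3 * dP) * b3 + tau * dB3))).
        ring.
      by rewrite -hP subrr.
    have : (c * dP + dB3 * S + b3 * c * dT) * (1 + et * b3 ^+ 2) = 0 by rewrite e2 mul0r.
    rewrite e1'. move=> H. rewrite -H. 
    have -> : (c * dP + dB3 * S + b3 * c * - (b3 * dP)) * (1 + et * b3 ^+ 2)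
      = c * (1 - b3 ^+ 2) * (dP * (1 + et * b3 ^+ 2)) + dB3 * S * (1 + et * b3 ^+ 2) by ring.
    rewrite hP2. ring.
  by move/eqP; rewrite mulf_eq0 (negbTE F0) /= => /eqP.
have hP0 : dP = 0.
  have : dP * (1 + et * b3 ^+ 2) = 0.
    rewrite e1' hB3 in hP. apply: (eq_from (x := dP - et * (- (b3 * dP) * b3 + tau * 0))).
      ring.
    by rewrite -hP subrr.
  by move/eqP; rewrite mulf_eq0 (negbTE m0) orbF => /eqP.
have hT0 : dT = 0 by rewrite e1' hP0 mulr0 oppr0.
have f1 : dB1 * cP + dB2 * sP = 0.
  move: E1; rewrite /dQ1 hT0 hP0 => /eqP.
  rewrite !(mulr0, mul0r, addr0, oppr0, add0r) mulf_eq0 (negbTE S0) /= => /eqP //.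
have f2 : dB2 * cP - dB1 * sP = 0.
  move: E2; rewrite /dQ2 hT0 hP0 => /eqP.
  rewrite !(mulr0, mul0r, addr0, oppr0, add0r, subr0) mulf_eq0 (negbTE S0) /= => /eqP //.
split => //.
- apply: (eq_from (x := cP * (dB1 * cP + dB2 * sP) - sP * (dB2 * cP - dB1 * sP))).
    rewrite subr0 -[dB1 in LHS]mulr1 -u. ring.
  by rewrite f1 f2 !mulr0 subr0.
- apply: (eq_from (x := sP * (dB1 * cP + dB2 * sP) + cP * (dB2 * cP - dB1 * sP))).
    rewrite subr0 -[dB2 in LHS]mulr1 -u. ring.
  by rewrite f1 f2 !mulr0 addr0.
Qed.
End S2.


Section D.
Variable R : realType.

Lemma d_entry (f : 'rV[R]_3 -> 'rV[R]_4) (h v : 'rV[R]_3) (i : 'I_4) :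
  differentiable f h -> 'd f h v 0 i = 'D_1 (fun e : R => f (e *: v + h) 0 i) 0.
Proof.
move=> df.
rewrite -deriveE // derive_mx; last exact: diff_derivable.
rewrite mxE /derive /= scale0r add0r.
have E : forall e : R, (e%:A + 0 : R) = e by move=> e; rewrite addr0 /GRing.scale/= mulr1.
set F1 := (fun h0 : R => _ in RHS).
rewrite (_ : F1 = fun e => e^-1 *: (f (e *: v + h) 0 i - f h 0 i)) //.
rewrite /F1; apply: funext => e; by rewrite E.
Qed.


Lemma hcE (h v : 'rV[R]_3) (e : R) k : hc (e *: v + h) k = e * hc v k + hc h k.
Proof. by rewrite /hc !mxE. Qed.

Lemma is_derive_sqlin (x a b : R) : is_derive x 1 (fun e : R => (e * a + b) ^+ 2) (2 * a * (x * a + b)).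
Proof.
have -> : (fun e : R => (e * a + b) ^+ 2) = (fun e => (e * a + b) * (e * a + b)).
  by apply: funext => e; rewrite expr2.
apply: (is_derive_eq (is_deriveM' (is_derive_lin x a b) (is_derive_lin x a b))).
ring.
Qed.

Lemma deriv_N (h v : 'rV[R]_3) : 0 < hnorm h ->
  is_derive (0:R) 1 (fun e => hnorm (e *: v + h))
    ((hc h 1 * hc v 1 + hc h 2 * hc v 2 + hc h 3 * hc v 3) / hnorm h).
Proof.
move=> hpos.
have -> : (fun e => hnorm (e *: v + h)) = fun e => Num.sqrt ((e * hc v 1 + hc h 1) ^+ 2
   + (e * hc v 2 + hc h 2) ^+ 2 + (e * hc v 3 + hc h 3) ^+ 2).
  by apply: funext => e; rewrite /hnorm !hcE.
have H := is_deriveD' (is_deriveD' (is_derive_sqlin 0 (hc v 1) (hc h 1))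
   (is_derive_sqlin 0 (hc v 2) (hc h 2))) (is_derive_sqlin 0 (hc v 3) (hc h 3)).
have pos : 0 < (0 * hc v 1 + hc h 1) ^+ 2 + (0 * hc v 2 + hc h 2) ^+ 2 + (0 * hc v 3 + hc h 3) ^+ 2.
  by rewrite !mul0r !add0r -sqrtr_gt0.
apply: (is_derive_eq (is_derive_sqrtc H pos)).
rewrite !mul0r !add0r -/(hnorm h).
have r0 : hnorm h != 0 by rewrite gt_eqF.
field. by rewrite r0.
Qed.

Lemma deriv_B (h v : 'rV[R]_3) k : 0 < hnorm h ->
  is_derive (0:R) 1 (fun e => hbar (e *: v + h) k)
    (hc v k / hnorm h - hc h k * ((hc h 1 * hc v 1 + hc h 2 * hc v 2 + hc h 3 * hc v 3) / hnorm h) / hnorm h ^+ 2).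
Proof.
move=> hpos.
have -> : (fun e => hbar (e *: v + h) k) = fun e => (e * hc v k + hc h k) * (hnorm (e *: v + h))^-1.
  by apply: funext => e; rewrite /hbar hcE.
have N0 : hnorm (0 *: v + h) != 0 by rewrite scale0r add0r gt_eqF.
apply: (is_derive_eq (is_deriveM' (is_derive_lin 0 (hc v k) (hc h k)) (is_deriveV' (deriv_N v hpos) N0))).
rewrite scale0r add0r mul0r add0r.
have r0 : hnorm h != 0 by rewrite gt_eqF.
field. by rewrite r0.
Qed.

Lemma deriv_Q (T P B1 B2 B3 : R -> R) (x dT dP dB1 dB2 dB3 : R) :
  is_derive x 1 T dT -> is_derive x 1 P dP -> is_derive x 1 B1 dB1 ->
  is_derive x 1 B2 dB2 -> is_derive x 1 B3 dB3 ->
  let c := cos (T x) in let S := sin (T x) in let cP := cos (P x) in let sP := sin (P x) in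
  [/\ is_derive x 1 (fun e => cos (T e) * cos (P e) - B3 e * sin (T e) * sin (P e))
        (dQ0 c S cP sP (B1 x) (B2 x) (B3 x) dT dP dB1 dB2 dB3),
      is_derive x 1 (fun e => sin (T e) * (B1 e * cos (P e) + B2 e * sin (P e)))
        (dQ1 c S cP sP (B1 x) (B2 x) (B3 x) dT dP dB1 dB2 dB3),
      is_derive x 1 (fun e => sin (T e) * (B2 e * cos (P e) - B1 e * sin (P e)))
        (dQ2 c S cP sP (B1 x) (B2 x) (B3 x) dT dP dB1 dB2 dB3) &
      is_derive x 1 (fun e => cos (T e) * sin (P e) + B3 e * sin (T e) * cos (P e))
        (dQ3 c S cP sP (B1 x) (B2 x) (B3 x) dT dP dB1 dB2 dB3)].
Proof.
move=> HT HP H1 H2 H3 c S cP sP.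
have cT := is_derive_cosc HT. have sT := is_derive_sinc HT.
have cPd := is_derive_cosc HP. have sPd := is_derive_sinc HP.
split.
- apply: (is_derive_eq (is_deriveB' (is_deriveM' cT cPd) (is_deriveM' (is_deriveM' H3 sT) sPd))).
  rewrite /dQ0 /c /S /cP /sP. ring.
- apply: (is_derive_eq (is_deriveM' sT (is_deriveD' (is_deriveM' H1 cPd) (is_deriveM' H2 sPd)))).
  rewrite /dQ1 /c /S /cP /sP. ring.
- apply: (is_derive_eq (is_deriveM' sT (is_deriveB' (is_deriveM' H2 cPd) (is_deriveM' H1 sPd)))).
  rewrite /dQ2 /c /S /cP /sP. ring.
- apply: (is_derive_eq (is_deriveD' (is_deriveM' cT sPd) (is_deriveM' (is_deriveM' H3 sT) cPd))).
  rewrite /dQ3 /c /S /cP /sP. ring.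
Qed.

Lemma row3_eq0 (v : 'rV[R]_3) : hc v 1 = 0 -> hc v 2 = 0 -> hc v 3 = 0 -> v = 0.
Proof.
move=> h1 h2 h3; apply/rowP => j; rewrite mxE.
case: j => -[|[|[|//]]] Hj.
- by move: h1; rewrite /hc /= (_ : inord 0 = Ordinal Hj) //; apply/val_inj; rewrite /= inordK.
- by move: h2; rewrite /hc /= (_ : inord 1 = Ordinal Hj) //; apply/val_inj; rewrite /= inordK.
- by move: h3; rewrite /hc /= (_ : inord 2 = Ordinal Hj) //; apply/val_inj; rewrite /= inordK.
Qed.

Lemma kernel_main (I1 I3 t : R) (h v : 'rV[R]_3) : 0 < t -> 0 < I1 -> 0 < hnorm h ->
  let tau := t * hnorm h / (2 * I1) in let s := hbar h 3 in
  sin tau != 0 ->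
  (1 + Defs.eta I1 I3 * s ^+ 2) * sin tau + Defs.eta I1 I3 * (1 - s ^+ 2) * tau * cos tau != 0 ->
  1 + Defs.eta I1 I3 * s ^+ 2 != 0 ->
  differentiable (fun g => gam I1 I3 g t) h ->
  'd (fun g => gam I1 I3 g t) h v = 0 -> v = 0.
Proof.
move=> t0 I10 hpos tau s S0 F0 m0 df dv.
set dN := (hc h 1 * hc v 1 + hc h 2 * hc v 2 + hc h 3 * hc v 3) / hnorm h.
pose N := fun e : R => hnorm (e *: v + h).
pose T := fun e : R => t * N e / (2 * I1).
pose B := fun k (e : R) => hbar (e *: v + h) k.
pose P := fun e : R => T e * Defs.eta I1 I3 * B 3%N e.
have HN : is_derive (0:R) 1 N dN := deriv_N v hpos.
have HB := fun k => deriv_B v k hpos.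
have HT : is_derive (0:R) 1 T (t * dN / (2 * I1)).
  apply: (is_derive_eq (is_deriveM' (is_deriveM' (is_derive_cstc 0 t) HN) (is_derive_cstc 0 (2 * I1)^-1))).
  rewrite /T; ring.
have T0 : T 0 = tau by rewrite /T /N scale0r add0r.
have B0 : forall k, B k 0 = hbar h k by move=> k; rewrite /B scale0r add0r.
have HP : is_derive (0:R) 1 P (Defs.eta I1 I3 * (t * dN / (2 * I1) * s + tau *
   (hc v 3 / hnorm h - hc h 3 * dN / hnorm h ^+ 2))).
  apply: (is_derive_eq (is_deriveM' (is_deriveM' HT (is_derive_cstc 0 (Defs.eta I1 I3))) (HB 3%N))).
  rewrite T0 /B /s /dN scale0r add0r. ring.
have [D0 D1 D2 D3] := deriv_Q HT HP (HB 1%N) (HB 2%N) (HB 3%N).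
have comp : forall i : 'I_4, 'D_1 (fun e : R => gam I1 I3 (e *: v + h) t 0 i) 0 = 0.
  move=> i; have := d_entry v i df; rewrite dv mxE => H; exact: (esym H).
have E0 := comp ord0. have E1 := comp (Ordinal (isT : (1 < 4)%N)).
have E2 := comp (Ordinal (isT : (2 < 4)%N)). have E3 := comp (Ordinal (isT : (3 < 4)%N)).
rewrite (_ : (fun e : R => gam I1 I3 (e *: v + h) t 0 ord0) =
   (fun e => cos (T e) * cos (P e) - B 3%N e * sin (T e) * sin (P e))) in E0; last first.
  by apply: funext => e; rewrite /gam mxE.
rewrite (_ : (fun e : R => gam I1 I3 (e *: v + h) t 0 (Ordinal (isT : (1 < 4)%N))) =
   (fun e => sin (T e) * (B 1%N e * cos (P e) + B 2%N e * sin (P e)))) in E1; last first.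
  by apply: funext => e; rewrite /gam mxE.
rewrite (_ : (fun e : R => gam I1 I3 (e *: v + h) t 0 (Ordinal (isT : (2 < 4)%N))) =
   (fun e => sin (T e) * (B 2%N e * cos (P e) - B 1%N e * sin (P e)))) in E2; last first.
  by apply: funext => e; rewrite /gam mxE.
rewrite (_ : (fun e : R => gam I1 I3 (e *: v + h) t 0 (Ordinal (isT : (3 < 4)%N))) =
   (fun e => cos (T e) * sin (P e) + B 3%N e * sin (T e) * cos (P e))) in E3; last first.
  by apply: funext => e; rewrite /gam mxE.
case: D0 => _ V0; rewrite V0 in E0.
case: D1 => _ V1; rewrite V1 in E1.
case: D2 => _ V2; rewrite V2 in E2.
case: D3 => _ V3; rewrite V3 in E3.
rewrite /P T0 /B !scale0r !add0r -/dN -/s in E0 E1 E2 E3.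
set dT := t * dN / (2 * I1) in E0 E1 E2 E3.
set dB1 := hc v 1 / hnorm h - hc h 1 * dN / hnorm h ^+ 2 in E0 E1 E2 E3.
set dB2 := hc v 2 / hnorm h - hc h 2 * dN / hnorm h ^+ 2 in E0 E1 E2 E3.
set dB3 := hc v 3 / hnorm h - hc h 3 * dN / hnorm h ^+ 2 in E0 E1 E2 E3.
have u : cos (tau * Defs.eta I1 I3 * s) ^+ 2 + sin (tau * Defs.eta I1 I3 * s) ^+ 2 = 1 by rewrite cos2Dsin2.
have [hT hB1 hB2 hB3] := kernel_alg u S0 F0 m0 erefl E0 E1 E2 E3.
have r0 : hnorm h != 0 by rewrite gt_eqF.
have hN : dN = 0.
  have -> : dN = dT * (2 * I1) / t.
    rewrite /dT. field. by rewrite (gt_eqF t0) (gt_eqF I10).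
  by rewrite hT !mul0r.
have fin : forall k, hc v k / hnorm h - hc h k * dN / hnorm h ^+ 2 = 0 -> hc v k = 0.
  move=> k; rewrite hN mulr0 mul0r subr0 => /eqP; rewrite mulf_eq0 invr_eq0 (negbTE r0) orbF.
  by move/eqP.
by apply: row3_eq0; apply: fin.
Qed.

End D.


Section E.
Variable R : realType.

Lemma ell_derivable (p : nat) (et sg s x : R) : derivable (fun tau => ell p et sg tau s) x 1.
Proof.
have Hin := (is_deriveB' (is_deriveM' (is_deriveM' (is_derive_id x 1) (is_derive_cstc x et)) (is_derive_cstc x s)) (is_derive_cstc x (sg * (pi / p%:R)))).
have H := is_deriveD' (is_deriveM' (is_derive_cosc (is_derive_id x 1)) (is_derive_sinc Hin))
   (is_deriveM' (is_deriveM' (is_derive_cstc x s) (is_derive_sinc (is_derive_id x 1))) (is_derive_cosc Hin)).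
rewrite /ell. by case: H.
Qed.

Lemma ell_cont (p : nat) (et sg s : R) : continuous (fun tau => ell p et sg tau s).
Proof.
move=> x; apply: differentiable_continuous; apply/derivable1_diffP; exact: ell_derivable.
Qed.

Lemma pm_le (p : nat) (et sg s c : R) : 0 < c -> ell p et sg c s = 0 ->
  (tau_ell_pm p et sg s <= c%:E)%E.
Proof.
move=> c0 e0; apply: ge_ereal_inf; exists c%:E => //; by exists c.
Qed.

Lemma b_bounds (p : nat) : (2 <= p)%N -> 0 < pi / p%:R :> R /\ pi / p%:R <= pi / 2 :> R.
Proof.
move=> p2; have pp : (0:R) < p%:R by rewrite ltr0n; lia.
have pi0 := @pi_gt0 R.
split; first by rewrite divr_gt0.
have p2' : (2:R) <= p%:R by rewrite ler_nat.
rewrite ler_pdivrMr //. nra.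
Qed.

Lemma ell_pos_point (p : nat) (et s : R) : (2 <= p)%N -> 0 < et -> 0 < s ->
  exists2 t1, 0 < t1 <= pi / 2 & 0 < ell p et 1 t1 s.
Proof.
move=> p2 et0 s0; have [b0 bpi] := b_bounds p2.
set b := pi / p%:R in b0 bpi *.
have pi0 := @pi_gt0 R.
have es0 : 0 < et * s by rewrite mulr_gt0.
have [ab|ba] := leP b (pi / 2 * (et * s)).
- exists (b / (et * s)).
    apply/andP; split; first by rewrite divr_gt0.
    by rewrite ler_pdivrMr.
  rewrite /ell (_ : b / (et * s) * et * s - 1 * (pi / p%:R) = 0); last first.
    rewrite mul1r -/b. field. apply/andP; split; by rewrite gt_eqF.
  rewrite sin0 cos0 mulr0 add0r mulr1 mulr_gt0 // sin_gt0_pi //.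
  apply/andP; split; first by rewrite divr_gt0.
  apply: (le_lt_trans (y := pi / 2)); first by rewrite ler_pdivrMr.
  lra.
- exists (pi / 2); first by apply/andP; split; lra.
  rewrite /ell cos_pihalf sin_pihalf mul0r add0r mulr1 mulr_gt0 //.
  apply: cos_gt0_pihalf. rewrite mul1r -/b. apply/andP; split.
    have : 0 < pi / 2 * et * s by rewrite -mulrA mulr_gt0 // divr_gt0.
    lra.
  have : 0 < pi / 2 * et * s by rewrite -mulrA mulr_gt0 // divr_gt0.
  rewrite -mulrA. lra.
Qed.

Lemma ell_sym (p : nat) (et tau s : R) : ell p et (-1) tau s = - ell p et 1 tau (- s).
Proof.
rewrite /ell (_ : tau * et * - s - 1 * (pi / p%:R) = - (tau * et * s - -1 * (pi / p%:R))); last by ring.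
rewrite sinN cosN. ring.
Qed.

Lemma ell0 (p : nat) (et sg s : R) : ell p et sg 0 s = sin (- (sg * (pi / p%:R))).
Proof. by rewrite /ell mul0r mul0r add0r cos0 sin0 mul1r mulr0 mul0r addr0. Qed.

Lemma root_exists (p : nat) (et s : R) : (2 <= p)%N -> 0 < et -> 0 < s ->
  exists2 c, 0 < c <= pi / 2 & ell p et 1 c s = 0.
Proof.
move=> p2 et0 s0; have [b0 bpi] := b_bounds p2.
have [t1 /andP[t10 t1p] l1] := ell_pos_point p2 et0 s0.
have l0 : ell p et 1 0 s < 0.
  rewrite ell0 mul1r sinN oppr_lt0 sin_gt0_pi //; apply/andP; split => //.
  have := @pi_gt0 R; lra.
have hb : Num.min (ell p et 1 0 s) (ell p et 1 t1 s) <= 0 <= Num.max (ell p et 1 0 s) (ell p et 1 t1 s).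
  by rewrite /= (min_l (ltW (lt_trans l0 l1))) (max_r (ltW (lt_trans l0 l1))) (ltW l0) (ltW l1).
have [c cin ec] := @IVT R (fun tau => ell p et 1 tau s) 0 t1 0 (ltW t10)
  (continuous_subspaceT (@ell_cont p et 1 s)) hb.
move: cin; rewrite in_itv /= => /andP[c0 c1].
exists c => //; apply/andP; split; last exact: (le_trans c1 t1p).
rewrite lt_neqAle c0 andbT; apply/eqP => c00; move: ec; rewrite -c00 => ec.
by move: l0; rewrite ec ltxx.
Qed.

Lemma tau_ell_le (p : nat) (et s : R) : (2 <= p)%N -> 0 < et ->
  (tau_ell p et s <= (pi / 2)%:E)%E.
Proof.
move=> p2 et0; rewrite /tau_ell ge_min.
have [s0|s0|->] := ltgtP s 0.
- apply/orP; right.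
  have s0' : 0 < - s by rewrite oppr_gt0.
  have [c /andP[c0 c1] ec] := root_exists p2 et0 s0'.
  apply: (le_trans (pm_le c0 _)); last by rewrite lee_fin.
  by rewrite ell_sym ec oppr0.
- apply/orP; left.
  have [c /andP[c0 c1] ec] := root_exists p2 et0 s0.
  apply: (le_trans (pm_le c0 ec)); by rewrite lee_fin.
- apply/orP; left; apply: pm_le.
    by rewrite divr_gt0 // pi_gt0.
  by rewrite /ell cos_pihalf !mul0r add0r.
Qed.

End E.

Unset Implicit Arguments. Set Strict Implicit.

Theorem mainTheorem7 (R : realType) (p : nat) (q : int) (I1 I3 : R) :
  (2 <= p)%N -> coprimez p%:Z q -> 0 < I1 -> 0 < I3 ->
  forall h : 'rV[R]_3, inC I1 I3 h ->
    ((t_max p I1 I3 h)%:E <= t_conj I1 I3 h)%E.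
Proof.
move=> p2 _ I10 I30 h hC.
rewrite /t_max.
have sum0 : 0 < hc h 1 ^+ 2 + hc h 2 ^+ 2 + hc h 3 ^+ 2.
  rewrite ltNge; apply/negP => H.
  have a1 := sqr_ge0 (hc h 1). have a2 := sqr_ge0 (hc h 2). have a3 := sqr_ge0 (hc h 3).
  have e1 : hc h 1 ^+ 2 = 0 by lra.
  have e2 : hc h 2 ^+ 2 = 0 by lra.
  have e3 : hc h 3 ^+ 2 = 0 by lra.
  move: hC; rewrite /inC e1 e2 e3 !add0r !mul0r. lra.
have r0 : 0 < hnorm h by rewrite /hnorm sqrtr_gt0.
set r := hnorm h in r0 *.
have r2 : r ^+ 2 = hc h 1 ^+ 2 + hc h 2 ^+ 2 + hc h 3 ^+ 2 by rewrite /r /hnorm sqr_sqrtr // ltW.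
set et := Defs.eta I1 I3.
have et1 : -1 < et.
  rewrite /et /Defs.eta. have : 0 < I1 / I3 by rewrite divr_gt0. lra.
set s := hbar h 3.
have s2 : s ^+ 2 <= 1.
  rewrite /s /hbar -/r expr_div_n ler_pdivrMr ?exprn_gt0 // mul1r r2.
  have := sqr_ge0 (hc h 1); have := sqr_ge0 (hc h 2); lra.
have s20 : 0 <= s ^+ 2 := sqr_ge0 s.
have m0 : 0 < 1 + et * s ^+ 2.
  have [e0|e0] := leP 0 et.
    have : 0 <= et * s ^+ 2 by rewrite mulr_ge0.
    lra.
  have : 0 <= (- et) * (1 - s ^+ 2) by rewrite mulr_ge0 // ?subr_ge0 // oppr_ge0 ltW.
  have -> : (- et) * (1 - s ^+ 2) = et * s ^+ 2 - et by ring.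
  lra.
set L := tau_ell p et s.
have L0 : (0 <= L)%E.
  rewrite /L /tau_ell le_min; apply/andP; split; apply: le_ereal_inf_tmp => _ [x [x0 _] <-];
  by rewrite lee_fin ltW.
set M := fine (Order.min pi%:E L).
apply: le_ereal_inf_tmp => _ [t [t0 ct] <-]. rewrite lee_fin.
rewrite leNgt; apply/negP => ht.
set tau := t * r / (2 * I1).
have I20 : 0 < 2 * I1 by rewrite mulr_gt0.
have tauM : tau < M.
  rewrite /tau ltr_pdivrMr //. move: ht; rewrite ltr_pdivlMr // => ht. lra.
have [taupi tauL] : tau < pi /\ (tau%:E < L)%E.
  have [piL|Lpi] := leP (pi%:E) L.
    move: tauM; rewrite /M (min_l piL) /= => tp; split => //.
    by apply: (lt_le_trans _ piL); rewrite lte_fin.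
  have Lfin : L \is a fin_num by rewrite ge0_fin_numE // (lt_trans Lpi) // ltey.
  move: tauM; rewrite /M (min_r (ltW Lpi)) => tp; split.
    apply: (lt_trans tp). by rewrite -lte_fin fineK.
  by rewrite -(fineK Lfin) lte_fin.
have tau0 : 0 < tau by rewrite /tau divr_gt0 // mulr_gt0.
have S0 : 0 < sin tau by rewrite sin_gt0_pi // tau0 taupi.
have pi0 := @pi_gt0 R.
have F0 : 0 < (1 + et * s ^+ 2) * sin tau + et * (1 - s ^+ 2) * tau * cos tau.
  have mS : 0 < (1 + et * s ^+ 2) * sin tau by rewrite mulr_gt0.
  have hs : 0 <= 1 - s ^+ 2 by lra.
  have ht0 : 0 <= tau by lra.
  have [tp|tp] := leP tau (pi / 2).
    have c0 : 0 <= cos tau by rewrite cos_ge0_pihalf //; apply/andP; split; lra.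
    have [e0|e0] := leP 0 et.
      have : 0 <= et * (1 - s ^+ 2) * tau * cos tau.
        do !apply: mulr_ge0 => //.
      lra.
    have xc' : tau * cos tau <= sin tau by apply: xcos_le_sin; apply/andP; split; lra.
    have e0' : 0 <= - et by lra.
    have k0 : 0 <= - et * (1 - s ^+ 2) by rewrite mulr_ge0.
    have : - et * (1 - s ^+ 2) * (tau * cos tau) <= - et * (1 - s ^+ 2) * sin tau.
      by rewrite ler_wpM2l.
    have : 0 < (1 + et) * sin tau by rewrite mulr_gt0 //; lra.
    move=> h1 h2.
    have -> : (1 + et * s ^+ 2) * sin tau + et * (1 - s ^+ 2) * tau * cos tau
      = (1 + et) * sin tau + (- et * (1 - s ^+ 2) * sin tau - - et * (1 - s ^+ 2) * (tau * cos tau)) by ring.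
    lra.
  have c0 : cos tau <= 0.
    have -> : tau = (tau - pi / 2) + pi / 2 by ring.
    rewrite cosDpihalf oppr_le0 sin_ge0_pi //; apply/andP; split; lra.
  have [e0|e0] := leP et 0.
    have : 0 <= (- et) * (1 - s ^+ 2) * tau * (- cos tau).
      do !apply: mulr_ge0 => //; lra.
    have -> : (- et) * (1 - s ^+ 2) * tau * (- cos tau) = et * (1 - s ^+ 2) * tau * cos tau by ring.
    lra.
  have := tau_ell_le s p2 e0. rewrite -/L => Lle.
  have : (tau%:E < (pi / 2)%:E)%E := lt_le_trans tauL Lle.
  rewrite lte_fin. lra.
case: ct => df [v [vn0 dv]].
have := kernel_main t0 I10 r0 (negbT (gt_eqF S0)) (negbT (gt_eqF F0)) (negbT (gt_eqF m0)) df dv.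
by move/eqP; rewrite (negbTE vn0).
Qed.
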